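(* Let $q$ be a prime and let $C\subseteq GF(q)^n$ be an affine subspace (affine code) such that $C\subseteq\mathcal{A}_{i_1}\cup\dots\cup\mathcal{A}_{i_k}$ for some weights $i_1,\dots,i_k$. Then $|C|\le q^n/L(n,q,i_1,\dots,i_k)$.
   Context: The weight ${\rm wt}(x)$ of $x\in GF(q)^n$ is the number of nonzero coordinates, and $\mathcal{A}_i=\{x\in GF(q)^n:{\rm wt}(x)=i\}$. For $f:GF(q)^n\to\mathbb{C}$ the Fourier transform is $\widehat{f}(z)=q^{-n/2}\sum_{x}f(x)\,\omega^{(x,z)}$ with $\omega=e^{2\pi i/q}$ and $(x,z)=\sum_i x_iz_i$ (computed in $\mathbb{Z}_q$). The support of a function is the set of arguments where it is nonzero. $L(n,q,i_1,\dots,i_k)$ is the minimum of $|{\rm supp}(f)|$ over all functions $f:GF(q)^n\to\mathbb{C}$, not identically zero, with ${\rm supp}(\widehat{f})\subseteq\mathcal{A}_{i_1}\cup\dots\cup\mathcal{A}_{i_k}$. *)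

(* Defs.v *)
From HB Require Import structures.
From mathcomp Require Import all_boot all_order all_algebra.
From mathcomp Require Import boolp reals trigo.
From mathcomp Require Import complex.
Set Implicit Arguments. Unset Strict Implicit. Unset Printing Implicit Defensive.
Import Order.TTheory GRing.Theory Num.Theory.
Local Open Scope ring_scope.
Local Open Scope complex_scope.

Section Defs.
Variables (R : realType) (q n : nat).

Definition vec := 'rV['F_q]_n.

Definition wt (x : vec) : nat := #|[set i : 'I_n | x ord0 i != 0]|.

Definition Aset (i : nat) : {set vec} := [set x : vec | wt x == i].

Definition Aunion (I : seq nat) : {set vec} := [set x : vec | wt x \in I].

Definition dotq (x z : vec) : 'F_q := \sum_(i < n) x ord0 i * z ord0 i.

Definition omega : R[i] :=
  cos (2 * pi / q%:R) +i* sin (2 * pi / q%:R).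

Definition fourier (f : vec -> R[i]) (z : vec) : R[i] :=
  ((Num.sqrt (q%:R : R)) ^- n)%:C *
    \sum_(x : vec) f x * omega ^+ (nat_of_ord (dotq x z)).

Definition supp (f : vec -> R[i]) : {set vec} := [set x | f x != 0].

Definition admissible (I : seq nat) (f : vec -> R[i]) : Prop :=
  (exists x, f x != 0) /\ supp (fourier f) \subset Aunion I.

Definition L_pred (I : seq nat) : pred nat :=
  fun m => `[< exists f, admissible I f /\ #|supp f| = m >].

(* L(n,q,i_1,...,i_k): the minimum of |supp f| over admissible f
   (set to 0 if no admissible f exists, a degenerate case) *)
Definition L (I : seq nat) : nat :=
  match pselect (exists m, L_pred I m) with
  | left h => ex_minn h
  | right _ => 0%N
  end.

Definition affine_subspace (C : {set vec}) : Prop :=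
  exists (a : vec) (V : {vspace vec}), C = [set a + v | v in V].

End Defs.

(* Main.v *)
Require Import Defs.
From HB Require Import structures.
From mathcomp Require Import all_boot all_order all_algebra.
From mathcomp Require Import boolp reals trigo.
From mathcomp Require Import complex.
From mathcomp Require Import ring lra.
Import Order.TTheory GRing.Theory Num.Theory.
Local Open Scope ring_scope.
Section Omega.
Local Open Scope complex_scope.
Variables (R : realType) (q : nat).
Hypothesis qprime : prime q.

Let th : R := 2 * pi / q%:R.
Lemma q_gt0 : (0 < q)%N. Proof. exact: prime_gt0. Qed.
Lemma qR_neq0 : (q%:R : R) != 0. Proof. by rewrite pnatr_eq0 -lt0n q_gt0. Qed.

Lemma omegaX t : omega R q ^+ t = cos (t%:R * th) +i* sin (t%:R * th).
Proof.
elim: t => [|t IH]; first by rewrite expr0 mul0r cos0 sin0.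
rewrite exprS IH /omega -/th /=.
have -> : t.+1%:R * th = th + t%:R * th by rewrite -natr1 mulrDl mul1r addrC.
by rewrite cosD sinD; congr (_ +i* _); ring.
Qed.

Lemma omega_q : omega R q ^+ q = 1.
Proof.
rewrite omegaX /th.
have -> : q%:R * (2 * pi / q%:R) = pi *+ 2 :> R.
  rewrite -mulr_natl; field; exact: qR_neq0.
by rewrite cos2pi sin2pi.
Qed.

Lemma omegaXmod m : omega R q ^+ (m %% q) = omega R q ^+ m.
Proof.
by rewrite {2}(divn_eq m q) exprD mulnC exprM omega_q expr1n mul1r.
Qed.

Lemma omega_neq0 : omega R q != 0.
Proof.
apply/eqP => H; move: omega_q; rewrite H expr0n.
have -> : (q == 0%N) = false by rewrite eqn0Ngt q_gt0.
by move/eqP; rewrite eq_sym oner_eq0.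
Qed.

Lemma omegaX_neq0 m : omega R q ^+ m != 0.
Proof. exact: expf_neq0 omega_neq0. Qed.

Lemma omegaX_neq1 t : (0 < t < q)%N -> omega R q ^+ t != 1.
Proof.
move=> /andP[t0 tq]; rewrite omegaX /th.
apply/negP => /eqP [] Hc _.
pose y : R := t%:R * pi / q%:R.
have E : t%:R * (2 * pi / q%:R) = y *+ 2 :> R.
  rewrite /y -mulr_natl; field; exact: qR_neq0.
move: Hc; rewrite E cos_mulr2n cos2sin2 => Hc.
have hy : 0 < sin y.
  apply: sin_gt0_pi; have qpos : (0 : R) < q%:R by rewrite ltr0n q_gt0.
  have tpos : (0 : R) < t%:R by rewrite ltr0n.
  have tlq : (t%:R : R) < q%:R by rewrite ltr_nat.
  rewrite /y divr_gt0 ?mulr_gt0 ?pi_gt0 //= ltr_pdivrMr // mulrC.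
  by rewrite ltr_pM2l // pi_gt0.
have : sin y ^+ 2 = 0 by move: Hc; rewrite mulr2n; lra.
by move/eqP; rewrite sqrf_eq0 => /eqP h; move: hy; rewrite h ltxx.
Qed.
End Omega.
Section CharSum.
Variables (R : realType) (q n : nat).
Hypothesis qprime : prime q.
Local Notation V := (vec q n).

Definition e (a : 'F_q) : R[i] := omega R q ^+ (nat_of_ord a).

Lemma eD a b : e (a + b) = e a * e b.
Proof.
rewrite /e -exprD.
have -> : nat_of_ord (a + b) = ((nat_of_ord a + nat_of_ord b) %% q)%N.
  by rewrite [LHS]/=; congr (_ %% _)%N; exact: Fp_cast.
exact: omegaXmod.
Qed.

Lemma e0 : e 0 = 1. Proof. by rewrite /e expr0. Qed.

Lemma e_neq1 a : a != 0 -> e a != 1.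
Proof.
move=> a0; apply: omegaX_neq1 => //.
rewrite lt0n; apply/andP; split.
  by apply: contraNneq a0 => h; apply/eqP; apply: val_inj.
by case: a a0 => m hm _ /=; rewrite Fp_cast in hm.
Qed.

Lemma e_neq0 a : e a != 0. Proof. exact: omegaX_neq0. Qed.

Lemma char_sum (S : {set V}) (phi : V -> 'F_q) :
  (forall u v, phi (u + v) = phi u + phi v) ->
  (forall u v, u \in S -> v \in S -> u + v \in S) ->
  (forall u, u \in S -> - u \in S) ->
  \sum_(v in S) e (phi v) = if [forall v in S, phi v == 0] then (#|S|%:R : R[i]) else 0.
Proof.
move=> phiD SD SN; case: ifP => H.
  rewrite (eq_bigr (fun _ => 1)) ?sumr_const //.
  by move=> v vS; move/forall_inP: H => /(_ v vS) /eqP ->; rewrite e0.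
have [v0 v0S nz] : exists2 v0, v0 \in S & phi v0 != 0.
  by apply/exists_inP; rewrite -negb_forall_in H.
set s := \sum_(v in S) _.
have Hs : s = s * e (phi v0).
  rewrite {1}/s (reindex_inj (addIr v0)) /=.
  rewrite (eq_bigl (fun j => j \in S)) => [|j].
    by rewrite /s mulr_suml; apply: eq_bigr => j _; rewrite phiD eD.
  apply/idP/idP => [h|h]; last exact: SD.
  by have := SD _ _ h (SN _ v0S); rewrite addrK.
apply/eqP; move: Hs => /eqP; rewrite -subr_eq0 -{1}(mulr1 s) -mulrBr mulf_eq0.
by rewrite subr_eq0 (eq_sym 1) (negbTE (e_neq1 _ nz)) orbF.
Qed.

Lemma dotqDl (x y z : V) : dotq (x + y) z = dotq x z + dotq y z :> 'F_q.
Proof. by rewrite /dotq -big_split; apply: eq_bigr => i _; rewrite mxE mulrDl. Qed.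
Lemma dotqDr (x y z : V) : dotq x (y + z) = dotq x y + dotq x z :> 'F_q.
Proof. by rewrite /dotq -big_split; apply: eq_bigr => i _; rewrite mxE mulrDr. Qed.
Lemma dotqNr (x y : V) : dotq x (- y) = - dotq x y :> 'F_q.
Proof. by rewrite /dotq -sumrN; apply: eq_bigr => i _; rewrite mxE mulrN. Qed.

Lemma dotq_nondeg (y : V) : [forall x, dotq x y == 0] = (y == 0).
Proof.
apply/forallP/eqP => [H|->]; last by move=> x; rewrite /dotq big1 // => i _; rewrite mxE mulr0.
apply/rowP => i; have /eqP := H (delta_mx 0 i).
rewrite /dotq (bigD1 i) //= big1 ?addr0 => [|j ji]; last by rewrite !mxE (negbTE ji) andbF mul0r.
by rewrite !mxE !eqxx mul1r => ->.
Qed.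

End CharSum.
Section Main.
Variables (R : realType) (q n : nat).
Hypothesis qprime : prime q.
Local Notation V := (vec q n).
Variables (a : V) (W : {vspace V}).

Let Vs : {set V} := [set v | v \in W].
Lemma VsD u v : u \in Vs -> v \in Vs -> u + v \in Vs.
Proof. by rewrite !inE; apply: memvD. Qed.
Lemma VsN u : u \in Vs -> - u \in Vs.
Proof. by rewrite !inE memvN. Qed.
Lemma Vs0 : 0 \in Vs.
Proof. by rewrite inE mem0v. Qed.

Definition ff (x : V) : R[i] := \sum_(v in Vs) e R q (dotq x (-(a + v))).

Lemma ffE x : ff x = e R q (dotq x (-a)) *
   (if [forall v in Vs, dotq x (-v) == 0] then (#|Vs|%:R : R[i]) else 0).
Proof.
rewrite -(@char_sum R q n qprime _ (fun v => dotq x (-v))).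
- by rewrite mulr_sumr; apply: eq_bigr => v _; rewrite opprD dotqDr (@eD R q qprime).
- by move=> u v; rewrite opprD dotqDr.
- exact: VsD.
- exact: VsN.
Qed.

Let P := [set x : V | [forall v in Vs, dotq x (-v) == 0]].

Lemma suppff : supp ff = P.
Proof.
apply/setP => x; rewrite !inE ffE; case: ifP => _.
  by rewrite mulf_eq0 negb_or (@e_neq0 R q qprime) pnatr_eq0 -lt0n card_gt0; apply/set0Pn; exists 0; exact: Vs0.
by rewrite mulr0 eqxx.
Qed.

Lemma sum_setT (v : V) :
  \sum_(x : V) e R q (dotq x v) = if v == 0 then (#|[set: V]|%:R : R[i]) else 0.
Proof.
have -> : \sum_(x : V) e R q (dotq x v) = \sum_(x in [set: V]) e R q (dotq x v).
  by apply: eq_bigl => x; rewrite inE.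
rewrite (@char_sum R q n qprime _ (fun x => dotq x v)).
- rewrite -dotq_nondeg; congr (if _ then _ else _); apply: eq_forallb => x.
  by rewrite inE.
- by move=> x y; rewrite dotqDl.
- by move=> *; rewrite inE.
- by move=> *; rewrite inE.
Qed.

Lemma card_P : (#|P| * #|Vs| = q ^ n)%N.
Proof.
have E1 : \sum_(x : V) \sum_(v in Vs) e R q (dotq x (-v)) = (#|P| * #|Vs|)%:R.
  rewrite (eq_bigr (fun x => if x \in P then (#|Vs|%:R : R[i]) else 0)).
    by rewrite -big_mkcond sumr_const natrM mulrC mulr_natr.
  move=> x _; rewrite (@char_sum R q n qprime _ (fun v => dotq x (-v))).
  - by rewrite inE.
  - by move=> u v; rewrite opprD dotqDr.
  - exact: VsD.
  - exact: VsN.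
rewrite exchange_big /= in E1.
rewrite (eq_bigr (fun v => if v == 0 then (#|[set: V]|%:R : R[i]) else 0)) in E1; last first.
  by move=> v _; rewrite sum_setT oppr_eq0.
rewrite (bigD1 0) ?Vs0 //= eqxx big1 ?addr0 in E1; last first.
  by move=> v /andP[_ /negbTE ->].
move/eqP: E1; rewrite eqr_nat => /eqP <-.
by rewrite cardsT card_mx card_Fp // mul1n.
Qed.

Let C : {set V} := [set a + v | v in W].

Lemma fhat0 z : z \notin C -> fourier ff z = 0.
Proof.
move=> zC; rewrite /fourier.
have -> : \sum_(x : V) ff x * omega R q ^+ (nat_of_ord (dotq x z)) =
          \sum_(x : V) \sum_(v in Vs) e R q (dotq x (z - (a + v))).
  apply: eq_bigr => x _; rewrite /ff mulr_suml; apply: eq_bigr => v _.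
  by rewrite [z - _]addrC dotqDr (@eD R q qprime).
rewrite exchange_big /= big1 ?mulr0 // => v vW.
rewrite sum_setT; case: eqP => // /eqP; rewrite subr_eq0 => /eqP zE.
by move: zC; rewrite zE; move: vW; rewrite inE => vW; rewrite imset_f.
Qed.

Lemma card_C : #|C| = #|Vs|.
Proof. by rewrite card_imset; [rewrite cardsE | exact: addrI]. Qed.

Lemma ff0 : ff 0 != 0.
Proof.
have : (0 : V) \in supp ff.
  by rewrite suppff inE; apply/forall_inP => v _; rewrite /dotq big1 // => i _; rewrite mxE mul0r.
by rewrite inE.
Qed.

End Main.

Theorem corollary4 (R : realType) (q n : nat) (I : seq nat)
  (C : {set vec q n}) :
  prime q -> affine_subspace C -> C \subset Aunion q n I ->
  (#|C|%:R : R) <= (q ^ n)%:R / (@L R q n I)%:R.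
Proof.
move=> qp [a [W ->]] sub.
have adm : admissible I (ff R q n a W).
  split; first by exists 0; exact: (ff0 R q n qp).
  apply/subsetP => z; rewrite inE => nz; apply: (subsetP sub).
  by apply: contraNT nz => zC; rewrite (fhat0 R q n qp).
set P := [set x : vec q n | [forall v in [set v | v \in W], dotq x (-v) == 0]].
have predP : L_pred R q n I #|P|.
  by apply/asboolP; exists (ff R q n a W); split => //; rewrite (suppff R q n qp).
have [Lpos LleP] : (0 < L R q n I)%N /\ (L R q n I <= #|P|)%N.
  rewrite /L; case: pselect => [h|nh]; last by exfalso; apply: nh; exists #|P|.
  case: ex_minnP => m Hm Hmin; split; last exact: Hmin.
  move/asboolP: Hm => [g [[[x gx] _] <-]].
  by rewrite card_gt0; apply/set0Pn; exists x; rewrite inE.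
rewrite ler_pdivlMr ?ltr0n // -natrM ler_nat card_C -(@card_P R q n qp W) mulnC.
by rewrite leq_mul2r LleP orbT.
Qed.
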